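(* Let $N$ be a positive integer, and let $\bar{\mathcal A}\subset\mathbb C^N\setminus\{\mathbf 0\}$ and $\bar{\mathcal B}_1\subset\mathcal H_{++}^N$ be convex and closed. Let $(\mathbf a^\star,\mathbf R_1^\star)$ be an optimal solution of the convex problem $$\min_{\mathbf a\in\bar{\mathcal A},\ \mathbf R_1\in\bar{\mathcal B}_1}\ \mathbf a^H\mathbf R_1^{-1}\mathbf a,$$ and let $\mathbf w^\star=\mathbf R_1^{\star-1}\mathbf a^\star/\|\mathbf R_1^{\star-1/2}\mathbf a^\star\|$. Then $$\mathbf w^{\star H}\mathbf a^\star\mathbf a^{\star H}\mathbf w^\star=\max_{\mathbf w\ne\mathbf 0}\ \min_{\mathbf a\in\bar{\mathcal A},\ \mathbf R_1\in\bar{\mathcal B}_1}\frac{\mathbf w^H\mathbf a\mathbf a^H\mathbf w}{\mathbf w^H\mathbf R_1\mathbf w}=\min_{\mathbf a\in\bar{\mathcal A},\ \mathbf R_1\in\bar{\mathcal B}_1}\ \max_{\mathbf w\ne\mathbf 0}\frac{\mathbf w^H\mathbf a\mathbf a^H\mathbf w}{\mathbf w^H\mathbf R_1\mathbf w}.$$ Moreover, $(\mathbf w^\star,\mathbf a^\star,\mathbf R_1^\star)$ is an optimal solution of both the maximin and the minimax problems.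
   Context: $\mathcal H_{++}^N$ is the set of $N\times N$ Hermitian positive definite matrices; $\mathbf R^{-1/2}$ is the Hermitian positive definite inverse square root; $\|\cdot\|$ is the Euclidean norm. *)

(* Defs.v *)
From HB Require Import structures.
From mathcomp Require Import all_boot all_order all_algebra.
From mathcomp Require Import complex.
From mathcomp Require Import boolp classical_sets reals.
Set Implicit Arguments. Unset Strict Implicit. Unset Printing Implicit Defensive.
Import Order.TTheory GRing.Theory Num.Theory.
Local Open Scope ring_scope.
Local Open Scope classical_set_scope.
Local Open Scope complex_scope.

Section Defs.
Variable R : realType.
Local Notation C := (R[i]).

Definition ctr (m n : nat) (A : 'M[C]_(m, n)) : 'M[C]_(n, m) :=
  (map_mx Num.conj A)^T.

Definition hermitian (N : nat) (A : 'M[C]_N) : Prop := ctr A = A.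

Definition hpd (N : nat) (A : 'M[C]_N) : Prop :=
  hermitian A /\ forall x : 'cV[C]_N, x != 0 -> 0 < (ctr x *m A *m x) 0 0.

Definition vnorm (N : nat) (v : 'cV[C]_N) : R :=
  Num.sqrt (\sum_(i < N) (complex.Re `|v i 0|) ^+ 2).

Definition convex_set (m n : nat) (S : set 'M[C]_(m, n)) : Prop :=
  forall x y, S x -> S y -> forall t : R, 0 <= t <= 1 ->
    S (t%:C *: x + (1 - t)%:C *: y).

Definition mx_converges (m n : nat) (u : nat -> 'M[C]_(m, n)) (l : 'M[C]_(m, n))
  : Prop :=
  forall (i : 'I_m) (j : 'I_n) (e : R), 0 < e ->
    exists M : nat, forall k, (M <= k)%N -> `|u k i j - l i j| < e%:C.

(* closedness in the Euclidean topology of C^(m x n), via sequences *)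
Definition closed_set (m n : nat) (S : set 'M[C]_(m, n)) : Prop :=
  forall (u : nat -> 'M[C]_(m, n)) l,
    (forall k, S (u k)) -> mx_converges u l -> S l.

Definition gain_ratio (N : nat) (w a : 'cV[C]_N) (R1 : 'M[C]_N) : R :=
  complex.Re (((ctr w *m a *m ctr a *m w) 0 0) / ((ctr w *m R1 *m w) 0 0)).

Definition inner_min (N : nat) (A : set 'cV[C]_N) (B : set 'M[C]_N)
  (w : 'cV[C]_N) : R :=
  inf [set r | exists a R1, A a /\ B R1 /\ r = gain_ratio w a R1].

Definition inner_max (N : nat) (a : 'cV[C]_N) (R1 : 'M[C]_N) : R :=
  sup [set r | exists w : 'cV[C]_N, w != 0 /\ r = gain_ratio w a R1].

Definition maximin_value (N : nat) (A : set 'cV[C]_N) (B : set 'M[C]_N) : R :=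
  sup [set r | exists w : 'cV[C]_N, w != 0 /\ r = inner_min A B w].

Definition minimax_value (N : nat) (A : set 'cV[C]_N) (B : set 'M[C]_N) : R :=
  inf [set r | exists a R1, A a /\ B R1 /\ r = inner_max a R1].

End Defs.

(* Main.v *)
Require Import Defs.
From HB Require Import structures.
From mathcomp Require Import all_boot all_order all_algebra.
From mathcomp Require Import complex.
From mathcomp Require Import boolp classical_sets reals.
From mathcomp Require Import ring lra.
Set Implicit Arguments. Unset Strict Implicit.
Import Order.TTheory GRing.Theory Num.Theory.
Local Open Scope ring_scope.
Local Open Scope complex_scope.
Section S.
Variable R : realType.
Local Notation C := R[i].
Local Notation RE := (@complex.Re R).
Local Notation IM := (@complex.Im R).
Implicit Types (c : C).
Lemma ReD (x y : C) : RE (x + y) = RE x + RE y. Proof. by case: x => a b; case: y => c d. Qed.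
Lemma ReN (x : C) : RE (- x) = - RE x. Proof. by case: x. Qed.
Lemma ReB (x y : C) : RE (x - y) = RE x - RE y. Proof. by rewrite ReD ReN. Qed.
Lemma ReMr (c : R) (x : C) : RE (c%:C * x) = c * RE x.
Proof. by case: x => a b /=; rewrite mul0r subr0. Qed.
Lemma ReJ (x : C) : RE (Num.conj x) = RE x. Proof. by case: x. Qed.
Definition n2 (x : C) := RE x ^+ 2 + IM x ^+ 2.
Lemma mulJ (x : C) : x * Num.conj x = (n2 x)%:C.
Proof. case: x => a b; rewrite /n2 /=; simpc. by rewrite !expr2 [b * a]mulrC addNr. Qed.
Lemma n2_ge0 (x : C) : 0 <= n2 x. Proof. by rewrite /n2 addr_ge0 // sqr_ge0. Qed.
Lemma n2_Re (x : C) : RE x ^+ 2 <= n2 x. Proof. by rewrite /n2 lerDl sqr_ge0. Qed.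
Lemma n2M (c : R) (x : C) : n2 (c%:C * x) = c ^+ 2 * n2 x.
Proof. case: x => a b; rewrite /n2 /=; simpc. rewrite /=. rewrite !exprMn. ring. Qed.
Lemma conj_realC (c : R) : Num.conj (c%:C) = c%:C. Proof. exact: conjc_real. Qed.

Section M.
Variable N : nat.
Local Notation V := 'cV[C]_N.
Local Notation M := 'M[C]_N.
Implicit Types (x y z : V).
Lemma ctrE m n (A : 'M[C]_(m, n)) i j : ctr A i j = Num.conj (A j i).
Proof. by rewrite /ctr !mxE. Qed.
Lemma ctrM m n p (A : 'M[C]_(m,n)) (B : 'M[C]_(n,p)) : ctr (A *m B) = ctr B *m ctr A.
Proof. by rewrite /ctr map_mxM trmx_mul. Qed.
Lemma ctrD m n (A B : 'M[C]_(m,n)) : ctr (A + B) = ctr A + ctr B.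
Proof. by apply/matrixP => i j; rewrite !(ctrE, mxE) rmorphD. Qed.
Lemma ctrN m n (A : 'M[C]_(m,n)) : ctr (- A) = - ctr A.
Proof. by apply/matrixP => i j; rewrite !(ctrE, mxE) rmorphN. Qed.
Lemma ctrZ m n c (A : 'M[C]_(m,n)) : ctr (c *: A) = Num.conj c *: ctr A.
Proof. by apply/matrixP => i j; rewrite !(ctrE, mxE) rmorphM. Qed.
Lemma ctrK m n (A : 'M[C]_(m,n)) : ctr (ctr A) = A.
Proof. by apply/matrixP => i j; rewrite !ctrE conjCK. Qed.

Definition dot (x y : V) : C := (ctr x *m y) 0 0.
Lemma dot_conj x y : Num.conj (dot x y) = dot y x.
Proof. by rewrite /dot -ctrE ctrM ctrK. Qed.
Lemma dotDl x y z : dot (x + y) z = dot x z + dot y z.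
Proof. by rewrite /dot ctrD mulmxDl mxE. Qed.
Lemma dotDr x y z : dot x (y + z) = dot x y + dot x z.
Proof. by rewrite /dot mulmxDr mxE. Qed.
Lemma dotNl x y : dot (- x) y = - dot x y.
Proof. by rewrite /dot ctrN mulNmx mxE. Qed.
Lemma dotNr x y : dot x (- y) = - dot x y.
Proof. by rewrite /dot mulmxN mxE. Qed.
Lemma dotBl x y z : dot (x - y) z = dot x z - dot y z. Proof. by rewrite dotDl dotNl. Qed.
Lemma dotBr x y z : dot x (y - z) = dot x y - dot x z. Proof. by rewrite dotDr dotNr. Qed.
Lemma dotZl c x y : dot (c *: x) y = Num.conj c * dot x y.
Proof. by rewrite /dot ctrZ -scalemxAl mxE. Qed.
Lemma dotZr c x y : dot x (c *: y) = c * dot x y.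
Proof. by rewrite /dot -scalemxAr mxE. Qed.
Lemma dot_mull (A : M) x y : dot (A *m x) y = dot x (ctr A *m y).
Proof. by rewrite /dot ctrM mulmxA. Qed.
Lemma dot0r x : dot x 0 = 0. Proof. by rewrite /dot mulmx0 mxE. Qed.
Definition rd x y := RE (dot x y).
Lemma rd_sym x y : rd x y = rd y x. Proof. by rewrite /rd -dot_conj ReJ. Qed.
Lemma rdDl x y z : rd (x + y) z = rd x z + rd y z. Proof. by rewrite /rd dotDl ReD. Qed.
Lemma rdDr x y z : rd x (y + z) = rd x y + rd x z. Proof. by rewrite /rd dotDr ReD. Qed.
Lemma rdNl x y : rd (- x) y = - rd x y. Proof. by rewrite /rd dotNl ReN. Qed.
Lemma rdNr x y : rd x (- y) = - rd x y. Proof. by rewrite /rd dotNr ReN. Qed.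
Lemma rdBl x y z : rd (x - y) z = rd x z - rd y z. Proof. by rewrite rdDl rdNl. Qed.
Lemma rdBr x y z : rd x (y - z) = rd x y - rd x z. Proof. by rewrite rdDr rdNr. Qed.
Lemma rdZl (c : R) x y : rd (c%:C *: x) y = c * rd x y.
Proof. by rewrite /rd dotZl conj_realC ReMr. Qed.
Lemma rdZr (c : R) x y : rd x (c%:C *: y) = c * rd x y.
Proof. by rewrite /rd dotZr ReMr. Qed.
Lemma rd0r x : rd x 0 = 0. Proof. by rewrite /rd dot0r. Qed.
Lemma rd_herm (H : M) x y : Defs.hermitian H -> rd x (H *m y) = rd y (H *m x).
Proof. by move=> hH; rewrite rd_sym /rd dot_mull; rewrite /Defs.hermitian in hH; rewrite hH. Qed.
Lemma hpd_herm (H : M) : hpd H -> Defs.hermitian H. Proof. by case. Qed.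
Lemma hpd_pos (H : M) x : hpd H -> x != 0 -> 0 < dot x (H *m x).
Proof. by case=> _ h /h; rewrite /dot mulmxA. Qed.
Lemma hpd_real (H : M) x : hpd H -> dot x (H *m x) = (rd x (H *m x))%:C.
Proof.
move=> hH; have [->|x0] := eqVneq x 0.
  by rewrite mulmx0 /rd dot0r.
have := hpd_pos hH x0; rewrite ltcE => /andP[/eqP h _].
rewrite /rd; move: h; case: (dot x (H *m x)) => a b /= ->; done.
Qed.
Lemma hpd_gt0 (H : M) x : hpd H -> x != 0 -> 0 < rd x (H *m x).
Proof. by move=> hH x0; have := hpd_pos hH x0; rewrite hpd_real // ltcR. Qed.
Lemma hpd_ge0 (H : M) x : hpd H -> 0 <= rd x (H *m x).
Proof.
move=> hH; have [->|x0] := eqVneq x 0; first by rewrite mulmx0 rd0r.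
exact/ltW/hpd_gt0.
Qed.
Lemma hpd_unit (H : M) : hpd H -> H \in unitmx.
Proof.
move=> hH; case Hu: (H \in unitmx) => //.
have : kermx H != 0.
  rewrite -mxrank_eq0 mxrank_ker subn_eq0 -ltnNge ltn_neqAle rank_leq_row andbT.
  by rewrite -row_free_unit in Hu; rewrite /row_free in Hu; rewrite Hu.
case/rowV0Pn => v /sub_kermxP vH v0.
have x0 : ctr v != 0.
  apply: contra v0 => /eqP h; by rewrite -(ctrK v) h /ctr map_mx0 trmx0.
have := hpd_pos hH x0.
have -> : H *m ctr v = 0 by rewrite -(hpd_herm hH) -ctrM vH /ctr map_mx0 trmx0.
by rewrite dot0r ltxx.
Qed.
Lemma num1E (w a : V) : (ctr w *m a *m ctr a *m w) 0 0 = dot w a * Num.conj (dot w a).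
Proof. by rewrite dot_conj -mulmxA [LHS]mxE big_ord1. Qed.
Lemma gainE (H : M) w a : hpd H ->
  gain_ratio w a H = n2 (dot w a) / rd w (H *m w).
Proof.
move=> hH; rewrite /gain_ratio num1E mulJ -mulmxA -/(dot w (H *m w)) hpd_real //.
by rewrite -fmorph_div.
Qed.
Lemma gain_ge0 (H : M) w a : hpd H -> 0 <= gain_ratio w a H.
Proof. by move=> hH; rewrite gainE // divr_ge0 ?n2_ge0 ?hpd_ge0. Qed.
Lemma CS (H : M) w a : hpd H -> w != 0 ->
  n2 (dot w a) <= rd w (H *m w) * rd a (invmx H *m a).
Proof.
move=> hH w0; have Hu := hpd_unit hH.
set m := invmx H *m a; have Hm : H *m m = a by rewrite /m mulKVmx.
set c := dot w a; set p := rd w (H *m w).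
have p0 : 0 < p by exact: hpd_gt0.
set l := c / p%:C.
set x := m - l *: w.
have := hpd_ge0 x hH.
have -> : rd x (H *m x) = rd m a - n2 c / p.
  have e1 : dot m (H *m w) = Num.conj c.
    by rewrite -(hpd_herm hH) -dot_mull Hm dot_conj.
  have e2 : dot w (H *m w) = p%:C by rewrite hpd_real.
  have e3 : Num.conj l = Num.conj c / p%:C.
    by rewrite /l fmorph_div; congr (_ / _); exact: conjc_real.
  have pC : p%:C != 0 by rewrite eq_complex /= negb_and gt_eqF.
  rewrite /rd; have -> : dot x (H *m x) = dot m a - c * Num.conj c / p%:C.
    rewrite /x mulmxBr -scalemxAr Hm !(dotBl, dotBr, dotZl, dotZr) e1 e2 e3 /l -/c.
    by field.
  by rewrite mulJ -fmorph_div /rd ReB.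
rewrite subr_ge0 ler_pdivrMr // => h; apply: le_trans h _.
by rewrite mulrC /m rd_sym.
Qed.
Lemma CS_gain (H : M) w a : hpd H -> w != 0 ->
  gain_ratio w a H <= rd a (invmx H *m a).
Proof.
move=> hH w0; rewrite gainE // ler_pdivrMr ?hpd_gt0 // mulrC; exact: CS.
Qed.
Lemma CS_eq (H : M) a : hpd H -> a != 0 ->
  let m := invmx H *m a in
  m != 0 /\ gain_ratio m a H = rd a m.
Proof.
move=> hH a0 m; have Hu := hpd_unit hH.
have Hm : H *m m = a by rewrite /m mulKVmx.
have m0 : m != 0 by apply: contra a0 => /eqP h; rewrite -Hm h mulmx0.
split=> //.
have e : dot m a = (rd a m)%:C by rewrite -{1}Hm hpd_real // -Hm rd_sym.
rewrite gainE // Hm e /n2 /= expr0n /= addr0 rd_sym.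
have p0 : 0 < rd m a by rewrite -Hm hpd_gt0.
by rewrite expr2 mulfK // gt_eqF.
Qed.

Lemma arith (t q phi Bv Y Y1 K : R) : 0 < t -> t < 1 -> 0 <= Y1 ->
  q <= t*(phi + 2*Bv - Y1) + (1-t)*(q - Y) ->
  0 <= (1-t)^+2*Y - 2*t*(1-t)*Bv + t^+2*K -> (1-t)*(q-phi) <= t*K.
Proof.
move=> t0 t1 Y10 h1 h2.
have h3 : t * (q - phi) <= 2 * t * Bv - (1 - t) * Y.
  have : t * Y1 >= 0 by rewrite mulr_ge0 // ltW.
  lra.
have h4 : (1 - t) * (t * (q - phi)) <= (1 - t) * (2 * t * Bv - (1 - t) * Y).
  by rewrite ler_wpM2l // subr_ge0 ltW.
have h5 : t * ((1 - t) * (q - phi)) <= t * (t * K) by lra.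
by rewrite ler_pM2l in h5.
Qed.

Lemma key_ineq (A : set V) (B : set M) (astar : V) (Rs : M)
  (hAconv : convex_set A) (hBhpd : forall R1, B R1 -> hpd R1)
  (hBconv : convex_set B) (hastar : A astar) (hRs : B Rs)
  (hopt : forall a R1, A a -> B R1 ->
     rd astar (invmx Rs *m astar) <= rd a (invmx R1 *m a))
  a R1 (ha : A a) (hR1 : B R1) (t : R) (t0 : 0 < t) (t1 : t < 1)
  (u : V) (hu : u = invmx Rs *m astar) (b : V) (hb : b = a - R1 *m u) :
  (1 - t) * (rd astar u - (2 * rd u a - rd u (R1 *m u))) <= t * rd b (invmx Rs *m b).
Proof.
have hRsp := hBhpd _ hRs; have hR1p := hBhpd _ hR1.
have hRsh := hpd_herm hRsp; have hR1h := hpd_herm hR1p.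
have RsU := hpd_unit hRsp.
have Hu : Rs *m u = astar by rewrite hu mulKVmx.
set Ri := invmx Rs.
have HRi : Rs *m (Ri *m b) = b by rewrite /Ri mulKVmx.
set at_ := t%:C *: a + (1 - t)%:C *: astar.
set Rt := t%:C *: R1 + (1 - t)%:C *: Rs.
have tI : 0 <= t <= 1 by rewrite (ltW t0) (ltW t1).
have hat : A at_ by exact: hAconv.
have hRt : B Rt by exact: hBconv.
have hRtp := hBhpd _ hRt.
have RtU := hpd_unit hRtp.
set z := invmx Rt *m at_.
have Hz : Rt *m z = at_ by rewrite /z mulKVmx.
have hq : rd astar u <= rd at_ z by rewrite hu; exact: hopt.
set y := z - u.
have zE : z = u + y by rewrite /y addrC subrK.
clearbody y.
have P1 : rd at_ z = t * rd z a + (1 - t) * rd z astar.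
  by rewrite rd_sym /at_ rdDr !rdZr.
have P2 : rd at_ z = t * rd z (R1 *m z) + (1 - t) * rd z (Rs *m z).
  by rewrite rd_sym -{1}Hz /Rt mulmxDl -!scalemxAl rdDr !rdZr.
have I1 : 2 * rd z astar - rd z (Rs *m z) = rd astar u - rd y (Rs *m y).
  rewrite -{1}Hu zE !(mulmxDr, rdDl, rdDr) (rd_herm u y hRsh) Hu (rd_sym u astar).
  ring.
have I2 : 2 * rd z a - rd z (R1 *m z) =
    (2 * rd u a - rd u (R1 *m u)) + 2 * rd y b - rd y (R1 *m y).
  rewrite zE hb !(mulmxDr, rdDl, rdDr, rdBr, rdNr) (rd_herm u y hR1h).
  ring.
have Y0 : 0 <= rd y (R1 *m y) by exact: hpd_ge0.
set v := (1 - t)%:C *: y - t%:C *: (Ri *m b).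
have I3 : rd v (Rs *m v) = (1 - t) ^+ 2 * rd y (Rs *m y) - 2 * t * (1 - t) * rd y b
     + t ^+ 2 * rd b (Ri *m b).
  rewrite /v mulmxBr -!scalemxAr HRi !(rdBl, rdBr, rdZl, rdZr).
  rewrite (rd_herm (Ri *m b) y hRsh) HRi (rd_sym (Ri *m b) b).
  ring.
have V0 : 0 <= rd v (Rs *m v) by exact: hpd_ge0.
rewrite I3 in V0.
have E : rd at_ z = t * (2 * rd z a - rd z (R1 *m z)) + (1 - t) * (2 * rd z astar - rd z (Rs *m z)).
  have -> : rd at_ z = 2 * rd at_ z - rd at_ z by ring.
  by rewrite {1}P1 P2; ring.
rewrite I1 I2 in E; rewrite E in hq.
apply: (arith t0 t1 Y0 _ V0).
move: hq; congr (_ <= _); ring.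
Qed.
Lemma gain_scale (H : M) w a (c : R) : hpd H -> c != 0 ->
  gain_ratio (c%:C *: w) a H = gain_ratio w a H.
Proof.
move=> hH c0; rewrite !gainE // dotZl conj_realC n2M -scalemxAr rdZl rdZr.
have [->|w0] := eqVneq w 0.
  by rewrite mulmx0 rd0r !mulr0 invr0 !mulr0.
have p0 := hpd_gt0 hH w0.
by field; rewrite gt_eqF // c0.
Qed.
Lemma dot_self x : RE (dot x x) = \sum_i n2 (x i 0).
Proof.
rewrite /dot mxE.
have -> : \sum_j ctr x 0 j * x j 0 = \sum_j (n2 (x j 0))%:C.
  by apply: eq_bigr => j _; rewrite ctrE mulrC mulJ.
by rewrite -rmorph_sum.
Qed.
Lemma vnorm_sq x : vnorm x ^+ 2 = rd x x.
Proof.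
rewrite /vnorm /rd dot_self sqr_sqrtr; last first.
  by apply: sumr_ge0 => i _; exact: sqr_ge0.
apply: eq_bigr => i _; rewrite normc_def /= sqr_sqrtr //.
by rewrite addr_ge0 // sqr_ge0.
Qed.
End M.
Lemma sup_max (E : set R) x : E x -> (forall y, E y -> y <= x) -> sup E = x.
Proof.
move=> Ex ub; apply/le_anti/andP; split.
  by apply: ge_sup; [exists x | exact: ub].
by apply: ub_le_sup => //; exists x; exact: ub.
Qed.
Lemma inf_min (E : set R) x : E x -> (forall y, E y -> x <= y) -> inf E = x.
Proof.
move=> Ex lb; apply/le_anti/andP; split.
  by apply: ge_inf => //; exists x; exact: lb.
by apply: lb_le_inf; [exists x | exact: lb].
Qed.
Lemma inf_le_elt (E : set R) x y : E y -> (forall z, E z -> x <= z) -> inf E <= y.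
Proof. by move=> Ey lb; apply: ge_inf => //; exists x. Qed.
Lemma arith_lim (d K : R) : (forall t, 0 < t -> t < 1 -> (1 - t) * d <= t * K) ->
  0 <= K -> d <= 0.
Proof.
move=> h K0; rewrite leNgt; apply/negP => d0.
have dK : 0 < d + K by lra.
set t := d / (2 * (d + K)).
have t0 : 0 < t by rewrite /t divr_gt0 // mulr_gt0.
have tE : t * (d + K) = d / 2 by rewrite /t; field; rewrite gt_eqF.
have t1 : t < 1.
  have : t * (d + K) < 1 * (d + K) by rewrite tE mul1r; lra.
  by rewrite ltr_pM2r.
have := h t t0 t1; lra.
Qed.
Lemma arith2 (q r x n : R) : 0 < q -> 0 < r -> q <= 2 * x - r -> x ^+ 2 <= n -> q <= n / r.
Proof.
move=> q0 r0 h1 h2; rewrite ler_pdivlMr //.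
have hx : 0 <= q + r <= 2 * x by apply/andP; split; lra.
have h3 : (q + r) ^+ 2 <= (2 * x) ^+ 2.
  case/andP: hx => ha hb; rewrite ler_sqr ?nnegrE //; lra.
have h4 : 0 <= (q - r) ^+ 2 by exact: sqr_ge0.
have e : (2 * x) ^+ 2 = 4 * x ^+ 2 by ring.
rewrite e in h3.
have : 4 * (q * r) <= 4 * x ^+ 2.
  have -> : 4 * (q * r) = (q + r) ^+ 2 - (q - r) ^+ 2 by ring.
  lra.
rewrite ler_pM2l; last by lra.
move=> h5; lra.
Qed.
End S.
Unset Implicit Arguments.

Theorem corollary1 (R : realType) (N : nat) (hN : (0 < N)%N)
  (A : set 'cV[complex R]_N) (B : set 'M[complex R]_N)
  (hA0 : forall a, A a -> a != 0)
  (hAconv : convex_set A) (hAclosed : closed_set A)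
  (hBhpd : forall R1, B R1 -> hpd R1)
  (hBconv : convex_set B) (hBclosed : closed_set B)
  (astar : 'cV[complex R]_N) (R1star : 'M[complex R]_N)
  (hastar : A astar) (hR1star : B R1star)
  (hopt : forall a R1, A a -> B R1 ->
     complex.Re ((ctr astar *m invmx R1star *m astar) 0 0)
       <= complex.Re ((ctr a *m invmx R1 *m a) 0 0))
  (S : 'M[complex R]_N) (hS : hpd S) (hS2 : S *m S = invmx R1star)
  (wstar : 'cV[complex R]_N)
  (hwstar : wstar = ((vnorm (S *m astar))^-1)%:C *: (invmx R1star *m astar)) :
  let v := complex.Re ((ctr wstar *m astar *m ctr astar *m wstar) 0 0) in
  (* the two values *)
  v = maximin_value A B /\ v = minimax_value A B /\
  (* (wstar, astar, R1star) solves the maximin problem *)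
  wstar != 0 /\
  (forall a R1, A a -> B R1 -> gain_ratio wstar astar R1star <= gain_ratio wstar a R1) /\
  inner_min A B wstar = gain_ratio wstar astar R1star /\
  (forall w, w != 0 -> inner_min A B w <= inner_min A B wstar) /\
  maximin_value A B = inner_min A B wstar /\
  (* (wstar, astar, R1star) solves the minimax problem *)
  (forall w, w != 0 -> gain_ratio w astar R1star <= gain_ratio wstar astar R1star) /\
  inner_max astar R1star = gain_ratio wstar astar R1star /\
  (forall a R1, A a -> B R1 -> inner_max astar R1star <= inner_max a R1) /\
  minimax_value A B = inner_max astar R1star /\
  v = gain_ratio wstar astar R1star.
Proof.
move=> v.
have hRsp := hBhpd _ hR1star.
have RsU := hpd_unit hRsp.
set Ri := invmx R1star in hopt hS2 hwstar *.
set u := Ri *m astar in hwstar *.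
have Hu : R1star *m u = astar by rewrite /u /Ri mulKVmx.
set q := rd astar u.
have hopt' : forall a R1, A a -> B R1 -> q <= rd a (invmx R1 *m a).
  move=> a R1 ha hR1; have := hopt a R1 ha hR1.
  by rewrite /q /rd /dot /u !mulmxA.
have a0 := hA0 _ hastar.
have [u0 gu] := CS_eq hRsp a0.
rewrite -/Ri -/u -/q in u0 gu.
have q0 : 0 < q by rewrite /q rd_sym -Hu hpd_gt0.
set nv := vnorm (S *m astar) in hwstar.
have nv2 : nv ^+ 2 = q.
  rewrite /nv vnorm_sq /rd dot_mull (hpd_herm hS) mulmxA hS2 //.
have nv_ge0 : 0 <= nv by rewrite /nv /vnorm sqrtr_ge0.
have nv0 : 0 < nv.
  rewrite lt_def nv_ge0 andbT; apply/eqP => h; move: nv2.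
  by rewrite h expr0n /= => e; move: q0; rewrite -e ltxx.
have nvi : nv^-1 != 0 by rewrite invr_eq0 gt_eqF.
have gq : gain_ratio wstar astar R1star = q by rewrite hwstar gain_scale.
have du : dot u astar = q%:C by rewrite -Hu hpd_real // Hu rd_sym.
have vq : v = q.
  rewrite /v num1E mulJ /= hwstar dotZl conj_realC n2M du /n2 /= expr0n /= addr0.
  by rewrite exprVn nv2; field; rewrite gt_eqF.
have saddle : forall a R1, A a -> B R1 -> q <= gain_ratio wstar a R1.
  move=> a R1 ha hR1; have hR1p := hBhpd _ hR1.
  rewrite hwstar gain_scale // gainE //.
  set b := a - R1 *m u.
  have K0 : 0 <= rd b (invmx R1star *m b).
    have : 0 <= rd (Ri *m b) (R1star *m (Ri *m b)) by exact: hpd_ge0.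
    by rewrite /Ri mulKVmx // rd_sym.
  have := arith_lim (fun t t0 t1 => key_ineq hAconv hBhpd hBconv hastar hR1star hopt' ha hR1 t0 t1 (erefl u) (erefl b)) K0.
  rewrite subr_le0 -/q => h.
  apply: (arith2 q0 _ h (n2_Re _)).
  exact: hpd_gt0.
have imin : inner_min A B wstar = q.
  apply: inf_min; first by exists astar, R1star; rewrite gq.
  by move=> r [a [R1 [ha [hR1 ->]]]]; exact: saddle.
have imax : forall a H, A a -> B H -> inner_max a H = rd a (invmx H *m a).
  move=> a H ha hH; have hHp := hBhpd _ hH; have [m0 gm] := CS_eq hHp (hA0 _ ha).
  apply: sup_max; first by exists (invmx H *m a); rewrite gm.
  by move=> r [w [w0 ->]]; exact: CS_gain.
have imaxs : inner_max astar R1star = q by rewrite imax.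
have mini : minimax_value A B = q.
  apply: inf_min; first by exists astar, R1star; rewrite imaxs.
  by move=> r [a [R1 [ha [hR1 ->]]]]; rewrite imax //; exact: hopt'.
have w0 : wstar != 0.
  by rewrite hwstar scaler_eq0 negb_or u0 andbT eq_complex /= negb_and nvi.
have imin_le : forall w, w != 0 -> inner_min A B w <= q.
  move=> w wn0; apply: le_trans (inf_le_elt (x := 0) _ _) _.
  - by exists astar, R1star.
  - by move=> z [a [R1 [ha [hR1 ->]]]]; exact: gain_ge0 (hBhpd _ hR1).
  - exact: CS_gain.
have maxi : maximin_value A B = q.
  apply: sup_max; first by exists wstar; rewrite imin.
  by move=> r [w [wn0 ->]]; exact: imin_le.
rewrite vq gq maxi mini imin imaxs.
do 3 (split => //).
split; first exact: saddle.
do 2 (split => //).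
split => //.
split; first by move=> w wn0; exact: CS_gain.
split => //.
split; first by move=> a R1 ha hR1; rewrite imax //; exact: hopt'.
by [].
Qed.
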